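(* The Burnside ring of finite racks $\mathrm{B}(\mathcal{R})$ admits the structure of a commutative ring with unit, with respect to a product satisfying $b(R')\,b(R)=b(R'\times R)$ for all finite racks $R,R'$, and with multiplicative identity $b(\star)$, the class of the one-element rack $\star$.
   Context: A rack is a set $R$ with a binary operation $\rhd$ such that every left multiplication $\ell_a\colon b\mapsto a\rhd b$ is a bijection and $a\rhd(b\rhd c)=(a\rhd b)\rhd(a\rhd c)$ for all $a,b,c$. The product $R'\times R$ of racks is the cartesian product with componentwise operation. A subrack is a subset $S$ with $\ell_s(S)=S$ for all $s\in S$; a decomposition of $R$ into $S$ and $T$ means $S,T$ are disjoint subracks (possibly empty) with $S\cup T=R$. $\mathrm{B}(\mathcal{R})$ is the abelian group generated by symbols $b(R)$, one for each finite rack $R$, subject to $b(R_1)=b(R_2)$ whenever $R_1\cong R_2$, and $b(R)=b(S)+b(T)$ whenever $R$ decomposes into $S$ and $T$. *)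

(* Defs.v *)
From HB Require Import structures.
From mathcomp Require Import all_boot all_order all_algebra.
Set Implicit Arguments. Unset Strict Implicit. Unset Printing Implicit Defensive.
Import GRing.Theory.
Local Open Scope ring_scope.

Record rackData := RackData { rcar : finType; rop : rcar -> rcar -> rcar }.

Definition is_rack (R : rackData) : Prop :=
  (forall a : rcar R, bijective (rop a)) /\
  (forall a b c : rcar R, rop a (rop b c) = rop (rop a b) (rop a c)).

Definition rack_iso (R1 R2 : rackData) : Prop :=
  exists f : rcar R1 -> rcar R2,
    bijective f /\ forall x y, f (rop x y) = rop (f x) (f y).

Definition is_subrack (R : rackData) (S : {set rcar R}) : Prop :=
  forall s, s \in S -> [set rop s x | x in S] = S.

(* The subset S with the restricted operation (for a subrack, insubd never
   takes the default branch, so this is exactly the restriction). *)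
Definition subRack (R : rackData) (S : {set rcar R}) : rackData :=
  @RackData {x : rcar R | x \in S}
    (fun x y => insubd x (rop (val x) (val y))).

Definition prodRack (R' R : rackData) : rackData :=
  @RackData (rcar R' * rcar R)%type
    (fun x y => (rop x.1 y.1, rop x.2 y.2)).

Definition starRack : rackData := @RackData unit (fun _ _ => tt).

Definition burnside_relations (C : zmodType) (c : rackData -> C) : Prop :=
  (forall R1 R2, is_rack R1 -> is_rack R2 -> rack_iso R1 R2 -> c R1 = c R2) /\
  (forall (R : rackData) (S T : {set rcar R}),
      is_rack R -> is_subrack S -> is_subrack T ->
      [disjoint S & T] -> S :|: T = setT ->
      c R = c (subRack S) + c (subRack T)).

(* (B, b) is the abelian group generated by the symbols b(R), R a finite rack,
   subject to the relations above: it satisfies the relations, is generated by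
   the b(R), and every relation-respecting map factors through an additive map. *)
Definition is_burnside_group (B : zmodType) (b : rackData -> B) : Prop :=
  burnside_relations b /\
  (forall x : B, exists s : seq (rackData * int),
      foldr (fun (p : rackData * int) (P : Prop) => is_rack p.1 /\ P) True s /\ x = \sum_(p <- s) (b p.1 *~ p.2)) /\
  (forall (C : zmodType) (c : rackData -> C), burnside_relations c ->
      exists f : B -> C, (forall x y, f (x + y) = f x + f y) /\
        forall R, is_rack R -> f (b R) = c R).

(* Main.v *)
Require Import Defs.
From HB Require Import structures.
From mathcomp Require Import all_boot all_order all_algebra.
From Stdlib Require Import Classical ClassicalEpsilon.
Set Implicit Arguments. Unset Strict Implicit. Unset Printing Implicit Defensive.
Import GRing.Theory.
Local Open Scope ring_scope.

Definition addf {B C : zmodType} (f : B -> C) := forall x y, f (x + y) = f x + f y.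

Lemma addf0 (B C : zmodType) (f : B -> C) : addf f -> f 0 = 0.
Proof. move=> Hf; apply/eqP; rewrite -(addrI (f 0) (_ : f 0 + f 0 = f 0 + 0)) //.
by rewrite -Hf !addr0. Qed.

Lemma addfN (B C : zmodType) (f : B -> C) : addf f -> forall x, f (- x) = - f x.
Proof. move=> Hf x; apply/eqP; by rewrite -addr_eq0 -Hf addNr (addf0 Hf). Qed.

Lemma addfMn (B C : zmodType) (f : B -> C) : addf f -> forall x n, f (x *+ n) = f x *+ n.
Proof. move=> Hf x; elim=> [|n IH]; first by rewrite !mulr0n (addf0 Hf).
by rewrite !mulrS Hf IH. Qed.

Lemma addfMz (B C : zmodType) (f : B -> C) : addf f -> forall x n, f (x *~ n) = f x *~ n.
Proof. move=> Hf x [n|n]; first exact: (addfMn Hf).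
rewrite NegzE !mulrNz (addfN Hf); congr (- _); exact: (addfMn Hf). Qed.

Lemma ext_gen (B C : zmodType) (b : rackData -> B) :
  (forall x : B, exists s : seq (rackData * int),
      foldr (fun (p : rackData * int) (P : Prop) => is_rack p.1 /\ P) True s /\ x = \sum_(p <- s) (b p.1 *~ p.2)) ->
  forall f g : B -> C, addf f -> addf g -> (forall R, is_rack R -> f (b R) = g (b R)) ->
  forall x, f x = g x.
Proof.
move=> Hgen f g Hf Hg Hfg x.
pose h y := f y - g y.
have Hh : addf h by move=> y z; rewrite /h Hf Hg; rewrite addrACA opprD.
suff: h x = 0 by move/eqP; rewrite subr_eq0 => /eqP.
have [s [Hs ->]] := Hgen x.
elim: s Hs => [|p s IH] /= Hs; first by rewrite big_nil (addf0 Hh).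
case: Hs => Hp Hs.
rewrite big_cons Hh IH // (addfMz Hh) /h Hfg // subrr mul0rz addr0 //.
Qed.

Lemma rack_inj (R : rackData) : is_rack R -> forall a : rcar R, injective (rop a).
Proof. by move=> [H _] a; apply: bij_inj. Qed.

Lemma subrack_closed (R : rackData) (S : {set rcar R}) : is_rack R ->
  (forall s x, s \in S -> x \in S -> rop s x \in S) -> is_subrack S.
Proof.
move=> HR HS s sS; apply/eqP; rewrite eqEcard card_imset; last exact: rack_inj.
rewrite leqnn andbT; apply/subsetP => y /imsetP [x xS ->]; exact: HS.
Qed.

Lemma subrack_in (R : rackData) (S : {set rcar R}) : is_subrack S ->
  forall s x, s \in S -> x \in S -> rop s x \in S.
Proof. by move=> HS s x sS xS; rewrite -(HS s sS); apply: imset_f. Qed.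

Lemma subRack_val (R : rackData) (S : {set rcar R}) (x y : rcar (subRack S)) :
  is_subrack S -> val (rop x y) = rop (val x) (val y).
Proof. by move=> HS /=; rewrite insubdK //; apply: subrack_in => //; apply: valP. Qed.

Lemma subRack_rack (R : rackData) (S : {set rcar R}) : is_rack R -> is_subrack S ->
  is_rack (subRack S).
Proof.
move=> HR HS; split.
  move=> a; apply: injF_bij => x y /(congr1 val); rewrite !subRack_val //.
  by move/(rack_inj HR)=> /val_inj.
by move=> a b' c; apply: val_inj; rewrite !subRack_val //; apply: HR.2.
Qed.

Lemma prodRack_rack R1 R2 : is_rack R1 -> is_rack R2 -> is_rack (prodRack R1 R2).
Proof.
move=> H1 H2; split.
  move=> a; apply: injF_bij => [[x1 x2] [y1 y2]] /= [] /(rack_inj H1) -> /(rack_inj H2) -> //.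
by move=> a b' c /=; congr pair; [apply: H1.2 | apply: H2.2].
Qed.

Lemma star_rack : is_rack starRack.
Proof. split=> //= a; exists id; by case. Qed.

Lemma iso_prod A A' C C' : rack_iso A A' -> rack_iso C C' ->
  rack_iso (prodRack A C) (prodRack A' C').
Proof.
move=> [f [[f' ff' f'f] fh]] [g [[g' gg' g'g] gh]].
exists (fun x : rcar (prodRack A C) => (f x.1, g x.2) : rcar (prodRack A' C')); split.
  exists (fun x : rcar (prodRack A' C') => (f' x.1, g' x.2) : rcar (prodRack A C)).
    by case=> x y /=; rewrite ff' gg'.
  by case=> x y /=; rewrite f'f g'g.
by move=> [x1 x2] [y1 y2] /=; rewrite fh gh.
Qed.

Lemma iso_refl A : rack_iso A A.
Proof. exists id; split=> //; exists id => //. Qed.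

Lemma iso_swap A C : rack_iso (prodRack A C) (prodRack C A).
Proof.
exists (fun x : rcar (prodRack A C) => (x.2, x.1) : rcar (prodRack C A)); split.
  exists (fun x : rcar (prodRack C A) => (x.2, x.1) : rcar (prodRack A C)); by case.
by [].
Qed.

Lemma iso_assoc A1 A2 A3 :
  rack_iso (prodRack A1 (prodRack A2 A3)) (prodRack (prodRack A1 A2) A3).
Proof.
exists (fun x : rcar (prodRack A1 (prodRack A2 A3)) =>
   ((x.1, x.2.1), x.2.2) : rcar (prodRack (prodRack A1 A2) A3)); split.
  exists (fun x : rcar (prodRack (prodRack A1 A2) A3) =>
   (x.1.1, (x.1.2, x.2)) : rcar (prodRack A1 (prodRack A2 A3))).
    by case=> ? [].
  by case=> [[]].
by [].
Qed.

Lemma iso_star A : rack_iso (prodRack starRack A) A.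
Proof.
exists (fun x : rcar (prodRack starRack A) => x.2); split.
  exists (fun x : rcar A => (tt, x) : rcar (prodRack starRack A)).
    by case=> [[]].
  by [].
by [].
Qed.

Lemma memS2 (T1 T2 : finType) (S : {set T2}) (p : T1 * T2) :
  p \in [set x : T1 * T2 | x.2 \in S] -> p.2 \in S.
Proof. by rewrite inE. Qed.

Lemma prod_subrack (R' R : rackData) (S : {set rcar R}) : is_rack R' -> is_rack R ->
  is_subrack S -> is_subrack ([set x : rcar (prodRack R' R) | x.2 \in S]).
Proof.
move=> H1 H2 HS; apply: subrack_closed; first exact: prodRack_rack.
by move=> s x; rewrite !inE /=; apply: subrack_in.
Qed.

Lemma iso_sub (R' R : rackData) (S : {set rcar R}) : is_rack R' -> is_rack R ->
  is_subrack S ->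
  rack_iso (subRack ([set x : rcar (prodRack R' R) | x.2 \in S]))
           (prodRack R' (subRack S)).
Proof.
move=> H1 H2 HS.
have HS' := prod_subrack H1 H2 HS.
pose f := fun x : rcar (subRack ([set x : rcar (prodRack R' R) | x.2 \in S])) =>
  ((val x).1, exist (fun y => y \in S) (val x).2 (memS2 (valP x)))
  : rcar (prodRack R' (subRack S)).
have gP : forall p : rcar (prodRack R' (subRack S)),
   ((p.1, val p.2) : rcar (prodRack R' R)) \in [set x : rcar (prodRack R' R) | x.2 \in S].
  by move=> p; rewrite inE /=; apply: valP.
pose g := fun p : rcar (prodRack R' (subRack S)) =>
  exist (fun x => x \in [set x : rcar (prodRack R' R) | x.2 \in S]) _ (gP p)
  : rcar (subRack ([set x : rcar (prodRack R' R) | x.2 \in S])).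
exists f; split.
  exists g.
    by move=> x; apply: val_inj; rewrite /= -surjective_pairing.
  by case=> a [c h]; rewrite /f /=; congr pair; apply: val_inj.
move=> x y; have E := subRack_val x y HS'.
rewrite /f; congr pair; first by rewrite E.
by apply: val_inj; rewrite (subRack_val _ _ HS) /= E.
Qed.

Lemma dec_right (B : zmodType) (b : rackData -> B) : burnside_relations b ->
  forall (R' R : rackData) (S T : {set rcar R}), is_rack R' -> is_rack R ->
  is_subrack S -> is_subrack T -> [disjoint S & T] -> S :|: T = setT ->
  b (prodRack R' R) = b (prodRack R' (subRack S)) + b (prodRack R' (subRack T)).
Proof.
move=> [Hiso Hdec] R' R S T H1 H2 HS HT Hd HU.
rewrite (Hdec _ [set x : rcar (prodRack R' R) | x.2 \in S]
                [set x : rcar (prodRack R' R) | x.2 \in T]).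
- congr (_ + _); apply: Hiso.
  + by apply: subRack_rack; [apply: prodRack_rack | apply: prod_subrack].
  + by apply: prodRack_rack => //; apply: subRack_rack.
  + exact: iso_sub.
  + by apply: subRack_rack; [apply: prodRack_rack | apply: prod_subrack].
  + by apply: prodRack_rack => //; apply: subRack_rack.
  + exact: iso_sub.
- exact: prodRack_rack.
- exact: prod_subrack.
- exact: prod_subrack.
- apply/pred0P => x /=; rewrite !inE; apply/negbTE/negP => /andP [xS xT].
  by move/pred0P: Hd => /(_ x.2) /=; rewrite xS xT.
- by apply/setP => x; rewrite !inE -in_setU HU in_setT.
Qed.

Theorem proposition3p15 (B : zmodType) (b : rackData -> B) :
  is_burnside_group b ->
  exists mul : B -> B -> B,
    (forall x y z, mul x (mul y z) = mul (mul x y) z) /\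
    (forall x y, mul x y = mul y x) /\
    (forall x y z, mul (x + y) z = mul x z + mul y z) /\
    (forall x, mul (b starRack) x = x) /\
    (forall R' R, is_rack R' -> is_rack R -> mul (b R') (b R) = b (prodRack R' R)).
Proof.
move=> [Hrel [Hgen Huniv]].
have Hrel' := Hrel; case: Hrel' => [Hiso Hdec].
have ext := ext_gen Hgen (C:=B).
have St1 : forall R', exists f : B -> B, is_rack R' ->
    addf f /\ forall R, is_rack R -> f (b R) = b (prodRack R' R).
  move=> R'; case: (classic (is_rack R')) => HR'; last by exists id.
  have [f [Hf Hfb]] := Huniv B (fun R => b (prodRack R' R)) (conj
    (fun R1 R2 H1 H2 H12 => Hiso _ _ (prodRack_rack HR' H1) (prodRack_rack HR' H2)
        (iso_prod (iso_refl R') H12))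
    (fun R S T HR HS HT Hd HU => dec_right Hrel HR' HR HS HT Hd HU)).
  by exists f.
pose F R' := proj1_sig (constructive_indefinite_description _ (St1 R')).
have HF : forall R', is_rack R' -> addf (F R') /\
    forall R, is_rack R -> F R' (b R) = b (prodRack R' R).
  by move=> R'; rewrite /F; case: constructive_indefinite_description.
have St2 : forall y, exists h : B -> B, addf h /\
    forall R', is_rack R' -> h (b R') = F R' y.
  move=> y.
  have Hc : burnside_relations (fun R' => F R' y).
    split.
      move=> R1 R2 H1 H2 H12; apply: ext; [exact: (HF _ H1).1 | exact: (HF _ H2).1 |].
      move=> R HR; rewrite (HF _ H1).2 // (HF _ H2).2 //.
      apply: Hiso; try apply: prodRack_rack => //.
      exact: iso_prod H12 (iso_refl R).
    move=> R' S T HR' HS HT Hd HU.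
    have HSr := subRack_rack HR' HS; have HTr := subRack_rack HR' HT.
    refine (ext (F R') (fun y => F (subRack S) y + F (subRack T) y) _ _ _ y).
    - exact: (HF _ HR').1.
    - move=> u v; rewrite (HF _ HSr).1 (HF _ HTr).1; exact: addrACA.
    move=> R HR; rewrite (HF _ HR').2 // (HF _ HSr).2 // (HF _ HTr).2 //.
    rewrite (Hiso _ _ (prodRack_rack HR' HR) (prodRack_rack HR HR') (iso_swap _ _)).
    rewrite (dec_right Hrel HR HR' HS HT Hd HU).
    congr (_ + _); apply: Hiso; try apply: prodRack_rack => //; exact: iso_swap.
  have [h [Hh Hhb]] := Huniv B _ Hc.
  by exists h.
pose H y := proj1_sig (constructive_indefinite_description _ (St2 y)).
have HH : forall y, addf (H y) /\ forall R', is_rack R' -> H y (b R') = F R' y.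
  by move=> y; rewrite /H; case: constructive_indefinite_description.
pose mul x y := H y x.
have mulL : forall y, addf (fun x => mul x y) by move=> y; exact: (HH y).1.
have mulR : forall x, addf (fun y => mul x y).
  move=> x u v; rewrite /mul.
  apply: (ext (H (u + v)) (fun x => H u x + H v x)).
  - exact: (HH _).1.
  - move=> p q; rewrite (HH u).1 (HH v).1; exact: addrACA.
  move=> R' HR'; rewrite !(HH _).2 //; exact: (HF _ HR').1.
have mulb : forall R' R, is_rack R' -> is_rack R -> mul (b R') (b R) = b (prodRack R' R).
  by move=> R' R H1 H2; rewrite /mul (HH _).2 // (HF _ H1).2.
have mL : forall y u v, mul (u + v) y = mul u y + mul v y.
  by move=> y u v; exact: (mulL y u v).
have mR : forall x u v, mul x (u + v) = mul x u + mul x v.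
  by move=> x u v; exact: (mulR x u v).
clearbody mul.
exists mul; split; last split; last split; last split.
- move=> x y z.
  apply: (ext (fun z => mul x (mul y z)) (fun z => mul (mul x y) z)).
  + by move=> u v /=; rewrite mR mR.
  + by move=> u v /=; rewrite mR.
  move=> R3 H3.
  apply: (ext (fun y => mul x (mul y (b R3))) (fun y => mul (mul x y) (b R3))).
  + by move=> u v /=; rewrite mL mR.
  + by move=> u v /=; rewrite mR mL.
  move=> R2 H2.
  apply: (ext (fun x => mul x (mul (b R2) (b R3))) (fun x => mul (mul x (b R2)) (b R3))).
  + by move=> u v /=; rewrite mL.
  + by move=> u v /=; rewrite mL mL.
  move=> R1 H1.
  rewrite !mulb //; try apply: prodRack_rack => //.
  apply: Hiso; try apply: prodRack_rack => //; try apply: prodRack_rack => //.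
  exact: iso_assoc.
- move=> x y.
  apply: (ext (fun y => mul x y) (fun y => mul y x)).
  + by move=> u v /=; rewrite mR.
  + by move=> u v /=; rewrite mL.
  move=> R HR.
  apply: (ext (fun x => mul x (b R)) (fun x => mul (b R) x)).
  + by move=> u v /=; rewrite mL.
  + by move=> u v /=; rewrite mR.
  move=> R' HR'; rewrite !mulb //; apply: Hiso; try apply: prodRack_rack => //.
  exact: iso_swap.
- by move=> x y z; rewrite mL.
- move=> x.
  apply: (ext (fun x => mul (b starRack) x) id).
  + by move=> u v /=; rewrite mR.
  + by [].
  move=> R HR.
  rewrite mulb //; last exact: star_rack.
  apply: Hiso => //; [apply: prodRack_rack => //; exact: star_rack | exact: iso_star].
- exact: mulb.
Qed.
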